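(* Let $A$ be a commutative normed algebra which does not consist entirely of topological divisors of zero (i.e. some element of $A$ is not a TDZ in $A$). If $A$ has approximate units or an approximate identity, then the completion $\mathrm{cl}(A)$ of $A$ is unital. *)

(* Defs.v *)
From Stdlib Require Import Reals.
Open Scope R_scope.

(* A (real) normed algebra: a real vector space with an associative bilinear
   product and a submultiplicative norm.  (Complex normed algebras are real
   normed algebras by restriction of scalars, with the same norm, product and
   completion.) *)
Record NormedAlgebra := {
  car :> Type;
  zero : car;
  add : car -> car -> car;
  opp : car -> car;
  scal : R -> car -> car;
  mul : car -> car -> car;
  norm : car -> R;
  addA : forall x y z, add x (add y z) = add (add x y) z;
  addC : forall x y, add x y = add y x;
  add0 : forall x, add zero x = x;
  addN : forall x, add x (opp x) = zero;
  scalA : forall a b x, scal a (scal b x) = scal (a * b) x;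
  scal1 : forall x, scal 1 x = x;
  scalDr : forall a x y, scal a (add x y) = add (scal a x) (scal a y);
  scalDl : forall a b x, scal (a + b) x = add (scal a x) (scal b x);
  mulA : forall x y z, mul x (mul y z) = mul (mul x y) z;
  mulDl : forall x y z, mul (add x y) z = add (mul x z) (mul y z);
  mulDr : forall x y z, mul x (add y z) = add (mul x y) (mul x z);
  mul_scall : forall a x y, mul (scal a x) y = scal a (mul x y);
  mul_scalr : forall a x y, mul x (scal a y) = scal a (mul x y);
  norm_ge0 : forall x, 0 <= norm x;
  norm_eq0 : forall x, norm x = 0 -> x = zero;
  norm_scal : forall a x, norm (scal a x) = Rabs a * norm x;
  norm_triangle : forall x y, norm (add x y) <= norm x + norm y;
  norm_submult : forall x y, norm (mul x y) <= norm x * norm y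
}.

Arguments zero {_}.
Arguments add {_}.
Arguments opp {_}.
Arguments scal {_}.
Arguments mul {_}.
Arguments norm {_}.

Definition sub {A : NormedAlgebra} (x y : A) : A := add x (opp y).

Definition commutative_alg (A : NormedAlgebra) : Prop :=
  forall x y : A, mul x y = mul y x.

Definition is_TDZ (A : NormedAlgebra) (x : A) : Prop :=
  exists z : nat -> A,
    (forall n, norm (z n) = 1) /\ Un_cv (fun n => norm (mul x (z n))) 0.

Definition has_approx_units (A : NormedAlgebra) : Prop :=
  forall (a : A) (eps : R), 0 < eps -> exists u : A, norm (sub (mul u a) a) < eps.

Definition has_approx_identity (A : NormedAlgebra) : Prop :=
  exists (D : Type) (le : D -> D -> Prop) (e : D -> A),
    (exists d : D, True) /\
    (forall d, le d d) /\
    (forall d1 d2 d3, le d1 d2 -> le d2 d3 -> le d1 d3) /\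
    (forall d1 d2, exists d3, le d1 d3 /\ le d2 d3) /\
    (forall (a : A) (eps : R), 0 < eps ->
       exists d0, forall d, le d0 d -> norm (sub (mul (e d) a) a) < eps).

(* The completion cl(A): Cauchy sequences in A modulo null sequences,
   with pointwise operations. *)
Definition cauchy_seq {A : NormedAlgebra} (x : nat -> A) : Prop :=
  forall eps : R, 0 < eps ->
    exists N : nat, forall n m, (N <= n)%nat -> (N <= m)%nat -> norm (sub (x n) (x m)) < eps.

(* equality of the classes of two Cauchy sequences in cl(A) *)
Definition cl_eq {A : NormedAlgebra} (x y : nat -> A) : Prop :=
  Un_cv (fun n => norm (sub (x n) (y n))) 0.

Definition completion_unital (A : NormedAlgebra) : Prop :=
  exists e : nat -> A, cauchy_seq e /\
    forall x : nat -> A, cauchy_seq x ->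
      cl_eq (fun n => mul (e n) (x n)) x /\ cl_eq (fun n => mul (x n) (e n)) x.

(* Main.v *)
Require Import Defs.
From Stdlib Require Import Reals.
From Stdlib Require Import Lra Lia Classical ClassicalEpsilon.

Section Alg.
Variable A : NormedAlgebra.

Lemma add0r (x : A) : add x zero = x.
Proof. rewrite addC. apply add0. Qed.

Lemma scal0 (x : A) : scal 0 x = zero.
Proof.
  set (s := scal 0 x).
  assert (H : s = add s s).
  { unfold s. rewrite <- scalDl. f_equal. ring. }
  transitivity (add (add s s) (opp s)).
  { rewrite <- addA, addN, add0r. reflexivity. }
  rewrite <- H. apply addN.
Qed.

Lemma oppE (x : A) : opp x = scal (-1) x.
Proof.
  assert (H1 : add x (scal (-1) x) = zero).
  { rewrite <- (scal1 A x) at 1. rewrite <- scalDl.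
    replace (1 + -1) with 0 by ring. apply scal0. }
  set (s := scal (-1) x) in *.
  symmetry. rewrite <- (add0r s). rewrite <- (addN A x). rewrite addA.
  rewrite (addC A s x), H1, add0. reflexivity.
Qed.

Lemma mul_oppl (x y : A) : mul (opp x) y = opp (mul x y).
Proof. rewrite !oppE, mul_scall. reflexivity. Qed.
Lemma mul_oppr (x y : A) : mul x (opp y) = opp (mul x y).
Proof. rewrite !oppE, mul_scalr. reflexivity. Qed.
Lemma mul_subl (x y z : A) : mul (sub x y) z = sub (mul x z) (mul y z).
Proof. unfold sub. rewrite mulDl, mul_oppl. reflexivity. Qed.
Lemma mul_subr (x y z : A) : mul x (sub y z) = sub (mul x y) (mul x z).
Proof. unfold sub. rewrite mulDr, mul_oppr. reflexivity. Qed.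

Lemma opp_sub (x y : A) : opp (sub x y) = sub y x.
Proof.
  unfold sub. rewrite !oppE, scalDr, scalA.
  replace (-1 * -1) with 1 by ring. rewrite scal1, addC. reflexivity.
Qed.

Lemma norm_opp (x : A) : norm (opp x) = norm x.
Proof. rewrite oppE, norm_scal. replace (Rabs (-1)) with 1. ring. rewrite Rabs_left by lra. ring. Qed.

Lemma norm_sub_sym (x y : A) : norm (sub x y) = norm (sub y x).
Proof. rewrite <- opp_sub, norm_opp. reflexivity. Qed.

Lemma sub_split (x y z : A) : sub x z = add (sub x y) (sub y z).
Proof.
  unfold sub. rewrite <- addA. rewrite (addA A (opp y) y (opp z)).
  rewrite (addC A (opp y) y), addN, add0. reflexivity.
Qed.

Lemma norm_sub_tri (x y z : A) : norm (sub x z) <= norm (sub x y) + norm (sub y z).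
Proof. rewrite (sub_split x y z). apply norm_triangle. Qed.

Lemma sub_add (x y : A) : add (sub x y) y = x.
Proof. unfold sub. rewrite <- addA, (addC A (opp y) y), addN, add0r. reflexivity. Qed.

Lemma norm_le_sub (x y : A) : norm x <= norm (sub x y) + norm y.
Proof. pose proof (norm_triangle A (sub x y) y) as H. rewrite sub_add in H. exact H. Qed.

End Alg.

Lemma inv_small (eps : R) : 0 < eps -> exists N, forall n, (N <= n)%nat -> / (INR n + 1) < eps.
Proof.
  intros He. destruct (archimed_cor1 eps He) as [N [HN HN0]].
  exists N. intros n Hn.
  apply Rle_lt_trans with (/ INR N); [|exact HN].
  apply Rinv_le_contravar. apply lt_0_INR; lia.
  apply le_INR in Hn. lra.
Qed.

Lemma notTDZ (A : NormedAlgebra) (a : A) : ~ is_TDZ A a ->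
  exists c, 0 < c /\ forall z : A, c * norm z <= norm (mul a z).
Proof.
  intros H. apply NNPP; intro Hn. apply H.
  assert (Hz : forall n : nat, exists z : A, norm (mul a z) < / (INR n + 1) * norm z).
  { intro n. apply NNPP; intro Hm. apply Hn. exists (/ (INR n + 1)). split.
    - apply Rinv_0_lt_compat; pose proof (pos_INR n); lra.
    - intro z. apply Rnot_lt_le. intro Hlt. apply Hm. exists z. exact Hlt. }
  set (z := fun n => proj1_sig (constructive_indefinite_description _ (Hz n))).
  assert (Hzn : forall n, norm (mul a (z n)) < / (INR n + 1) * norm (z n)).
  { intro n. exact (proj2_sig (constructive_indefinite_description _ (Hz n))). }
  assert (Hk : forall n : nat, 0 < / (INR n + 1)).
  { intro n; apply Rinv_0_lt_compat; pose proof (pos_INR n); lra. }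
  assert (Hpos : forall n, 0 < norm (z n)).
  { intro n. destruct (Rle_lt_or_eq_dec 0 (norm (z n)) (norm_ge0 A _)) as [h|h]; auto.
    exfalso. specialize (Hzn n). rewrite <- h in Hzn.
    pose proof (norm_ge0 A (mul a (z n))). lra. }
  exists (fun n => scal (/ norm (z n)) (z n)). split.
  - intro n. rewrite norm_scal. rewrite Rabs_pos_eq.
    + field. specialize (Hpos n). lra.
    + left. apply Rinv_0_lt_compat. auto.
  - intros eps He. destruct (inv_small eps He) as [N HN]. exists N. intros n Hn0.
    unfold R_dist. rewrite Rminus_0_r. rewrite Rabs_pos_eq by apply norm_ge0.
    rewrite mul_scalr, norm_scal, Rabs_pos_eq.
    2: { left. apply Rinv_0_lt_compat. auto. }
    apply Rlt_trans with (/ norm (z n) * (/ (INR n + 1) * norm (z n))).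
    + apply Rmult_lt_compat_l. apply Rinv_0_lt_compat; auto. auto.
    + replace (/ norm (z n) * (/ (INR n + 1) * norm (z n))) with (/ (INR n + 1)).
      * apply HN. lia.
      * field. specialize (Hpos n). pose proof (pos_INR n). lra.
Qed.

Theorem mainTheorem6 (A : NormedAlgebra) :
  commutative_alg A ->
  (exists a : A, ~ is_TDZ A a) ->
  (has_approx_units A \/ has_approx_identity A) ->
  completion_unital A.
Proof.
  intros Hcom [a Ha] Hau.
  assert (HU : has_approx_units A).
  { destruct Hau as [H|[D [le [e [_ [Hr [_ [_ He]]]]]]]]; [exact H|].
    intros x eps Heps. destruct (He x eps Heps) as [d0 Hd]. exists (e d0). apply Hd, Hr. }
  destruct (notTDZ A a Ha) as [c [Hc Hcz]].
  assert (Hk : forall n : nat, 0 < / (INR n + 1)).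
  { intro n; apply Rinv_0_lt_compat; pose proof (pos_INR n); lra. }
  assert (Hu : forall n : nat, {u : A | norm (sub (mul u a) a) < / (INR n + 1)}).
  { intro n. apply constructive_indefinite_description. apply HU. auto. }
  set (u := fun n => proj1_sig (Hu n)).
  assert (Hun : forall n, norm (sub (mul (u n) a) a) < / (INR n + 1))
    by (intro n; exact (proj2_sig (Hu n))).
  assert (K : forall n x, c * norm (sub (mul (u n) x) x) <= / (INR n + 1) * norm x).
  { intros n x. eapply Rle_trans. apply Hcz. rewrite mul_subr.
    rewrite mulA, (Hcom a (u n)), <- mul_subl.
    eapply Rle_trans. apply norm_submult. apply Rmult_le_compat_r. apply norm_ge0.
    left; apply Hun. }
  exists u. split.
  - intros eps He. destruct (inv_small (c * eps / 2)) as [N HN].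
    { apply Rmult_lt_0_compat; [apply Rmult_lt_0_compat|]; lra. }
    exists N. intros n m Hn Hm.
    assert (c * norm (sub (u n) (u m)) < c * eps).
    { eapply Rle_lt_trans. apply Hcz. rewrite mul_subr, (Hcom a (u n)), (Hcom a (u m)).
      eapply Rle_lt_trans. apply (norm_sub_tri A _ a _).
      rewrite (norm_sub_sym A a).
      pose proof (HN n Hn). pose proof (HN m Hm). pose proof (Hun n). pose proof (Hun m).
      lra. }
    apply Rmult_lt_reg_l with c; auto.
  - intros x Hx. destruct (Hx 1 Rlt_0_1) as [N1 HN1].
    set (B := norm (x N1) + 1).
    assert (HB : 0 < B) by (unfold B; pose proof (norm_ge0 A (x N1)); lra).
    assert (main : Un_cv (fun n => norm (sub (mul (u n) (x n)) (x n))) 0).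
    { intros eps He. destruct (inv_small (c * eps / B)) as [N2 HN2].
      { unfold Rdiv. apply Rmult_lt_0_compat; [apply Rmult_lt_0_compat|]; auto.
        apply Rinv_0_lt_compat; auto. }
      exists (max N1 N2). intros n Hn.
      unfold R_dist. rewrite Rminus_0_r. rewrite Rabs_pos_eq by apply norm_ge0.
      assert (H1 : / (INR n + 1) < c * eps / B) by (apply HN2; lia).
      assert (H2 : norm (x n) <= B).
      { unfold B. pose proof (norm_le_sub A (x n) (x N1)).
        pose proof (HN1 n N1 ltac:(lia) ltac:(lia)). lra. }
      assert (H3 : c * norm (sub (mul (u n) (x n)) (x n)) < c * eps).
      { eapply Rle_lt_trans. apply K.
        eapply Rle_lt_trans. apply Rmult_le_compat_l. left; apply Hk. exact H2.
        replace (c * eps) with (c * eps / B * B) by (field; lra).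
        apply Rmult_lt_compat_r; auto. }
      apply Rmult_lt_reg_l with c; auto. }
    split; [exact main|].
    intros eps He. destruct (main eps He) as [N HN]. exists N. intros n Hn.
    cbv beta. rewrite Hcom. apply HN. auto.
Qed.
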